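(* Let $T>0$ and let $\alpha:[0,T]\to(0,1)$ be a continuously differentiable, decreasing function, written $t\mapsto\alpha_t$. Consider the variance preserving SDE (VPSDE) on $\mathbb{R}^D$ with coefficients ${F}_t=\frac12\frac{d\log\alpha_t}{dt}I$, ${G}_t=\sqrt{-\frac{d\log\alpha_t}{dt}}\,I$, and set $L_t=\sqrt{1-\alpha_t}\,I$ (so $L_tL_t^T=\Sigma_t=(1-\alpha_t)I$). Let $\Psi(t,s)$ be the transition matrix associated with $F$, i.e. $\frac{\partial}{\partial t}\Psi(t,s)=F_t\Psi(t,s)$, $\Psi(s,s)=I$. Let $\epsilon_\theta:\mathbb{R}^D\times[0,T]\to\mathbb{R}^D$ be any function. Then for $0\le t-\Delta t< t\le T$ the exponential-integrator update $$\hat{x}_{t-\Delta t}=\Psi(t-\Delta t,t)\hat{x}_t+\Big[\int_t^{t-\Delta t}\tfrac12\Psi(t-\Delta t,\tau)G_\tau G_\tau^TL_\tau^{-T}\,d\tau\Big]\epsilon_\theta(\hat{x}_t,t)$$ equals $$\hat{x}_{t-\Delta t}=\sqrt{\frac{\alpha_{t-\Delta t}}{\alpha_t}}\,\hat{x}_t+\Big[\sqrt{1-\alpha_{t-\Delta t}}-\sqrt{\frac{\alpha_{t-\Delta t}}{\alpha_t}}\sqrt{1-\alpha_t}\Big]\epsilon_\theta(\hat{x}_t,t),$$ which is exactly the deterministic DDIM sampling update.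
   Context: This update is the exponential-integrator discretization of the probability flow ODE $\frac{d\hat x}{dt}=F_t\hat x+\frac12 G_tG_t^TL_t^{-T}\epsilon_\theta(\hat x,t)$, where $\epsilon_\theta$ is a (noise-prediction) network, obtained by freezing $\epsilon_\theta$ at its value at time $t$ over $[t-\Delta t,t]$. The deterministic DDIM update (Song, Meng, Ermon) is the displayed second formula. *)

(* Defs.v *)
From HB Require Import structures.
From mathcomp Require Import all_boot all_order all_algebra.
From mathcomp Require Import all_classical all_reals all_analysis.
Set Implicit Arguments. Unset Strict Implicit. Unset Printing Implicit Defensive.
Import Order.TTheory GRing.Theory Num.Theory.
Import numFieldNormedType.Exports.
Local Open Scope classical_set_scope.
Local Open Scope ring_scope.

Definition dlog {R : realType} (alpha : R -> R) (t : R) : R :=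
  derive1 (fun s => ln (alpha s)) t.

Definition vpF {R : realType} (D : nat) (alpha : R -> R) (t : R) : 'M[R]_D :=
  (2^-1 * dlog alpha t)%:M.
Definition vpG {R : realType} (D : nat) (alpha : R -> R) (t : R) : 'M[R]_D :=
  (Num.sqrt (- dlog alpha t))%:M.
Definition vpL {R : realType} (D : nat) (alpha : R -> R) (t : R) : 'M[R]_D :=
  (Num.sqrt (1 - alpha t))%:M.

Definition mx_integral {R : realType} (m n : nat) (a b : R)
  (M : R -> 'M[R]_(m, n)) : 'M[R]_(m, n) :=
  \matrix_(i, j)
    (if a <= b then Rintegral lebesgue_measure `[a, b] (fun tau => M tau i j)
     else - Rintegral lebesgue_measure `[b, a] (fun tau => M tau i j)).

(* Main.v *)
Require Import Defs.
From HB Require Import structures.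
From mathcomp Require Import all_boot all_order all_algebra.
From mathcomp Require Import all_classical all_reals all_analysis.
From mathcomp Require Import ring lra.
Import Order.TTheory GRing.Theory Num.Theory.
Import numFieldNormedType.Exports.
Local Open Scope classical_set_scope.
Local Open Scope ring_scope.

Lemma dlogE {R : realType} {alpha : R -> R} {x : R} :
  derivable alpha x 1 -> 0 < alpha x -> dlog alpha x = derive1 alpha x / alpha x.
Proof.
move=> da ax; rewrite /dlog.
have H := is_derive1_comp (is_derive1_ln ax) (derivableP da).
have -> : (fun s => ln (alpha s)) = (@ln R) \o alpha by [].
by rewrite derive1E (@derive_val _ _ _ _ _ _ _ H) derive1E mulrC.
Qed.

Lemma alpha_cont {R : realType} {T : R} {alpha : R -> R} :
  (forall t, t \in `[0, T] -> derivable alpha t 1) ->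
  forall v, v \in `[0, T] -> {for v, continuous alpha}.
Proof.
move=> da v vT; apply: differentiable_continuous; apply/derivable1_diffP; exact: da.
Qed.

Lemma q_within (R : realType) (D : nat) (T : R) (alpha : R -> R)
  (Psi : R -> R -> 'M[R]_D) s i j :
  (forall t, t \in `[0, T] -> 0 < alpha t < 1) ->
  (forall t, t \in `[0, T] -> derivable alpha t 1) ->
  {within `[0, T], continuous (fun u => Psi u s)} ->
  {within `[0, T], continuous ((fun v => Psi v s i j) * (fun v => (Num.sqrt (alpha v))^-1))}.
Proof.
move=> a01 da Hc.
have E : {within `[0, T], continuous (fun v => Psi v s i j)}.
  move=> v; have := @continuous_comp _ _ _ (from_subspace _ (fun u => Psi u s)) (fun M : 'M[R]_D => M i j) v (Hc v) (@coord_continuous _ _ _ i j _); exact.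
have K : {within `[0, T], continuous (fun v => (Num.sqrt (alpha v))^-1)}.
  apply: continuous_in_subspaceT => v; rewrite inE /= => vT.
  have /andP[a0 _] := a01 v vT.
  have h1 : {for v, continuous (fun x => Num.sqrt (alpha x))}.
    have := continuous_comp (alpha_cont da v vT) (@sqrt_continuous R (alpha v)). exact.
  have h2 : Num.sqrt (alpha v) != 0 by rewrite gt_eqF // sqrtr_gt0.
  exact: (cvgV h2 h1).
move=> v; apply: continuousM; [exact: E | exact: K].
Qed.

Lemma q_der (R : realType) (D : nat) (T : R) (alpha : R -> R)
  (Psi : R -> R -> 'M[R]_D) s i j y :
  (forall t, t \in `[0, T] -> 0 < alpha t < 1) ->
  (forall t, t \in `[0, T] -> derivable alpha t 1) ->
  (forall s t, s \in `[0, T] -> t \in `]0, T[ ->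
     is_derive t 1 (fun u => Psi u s) (vpF D alpha t *m Psi t s)) ->
  s \in `[0, T] -> y \in `]0, T[ ->
  is_derive y 1 ((fun v => Psi v s i j) * (fun v => (Num.sqrt (alpha v))^-1)) 0.
Proof.
move=> a01 da Hd sT yT.
have yT' : y \in `[0, T] by move: yT; rewrite !in_itv /= => /andP[? ?]; apply/andP; split; apply: ltW.
have dP := Hd s y sT yT.
have dE : is_derive y 1 (fun u => Psi u s i j) ((vpF D alpha y *m Psi y s) i j).
  apply: DeriveDef.
    by move/derivable_mxP: (@ex_derive _ _ _ _ _ _ _ dP) => /(_ i j).
  have := derive_mx (@ex_derive _ _ _ _ _ _ _ dP).
  move/(congr1 (fun M : 'M[R]_D => M i j)); rewrite mxE => <-.
  by rewrite (@derive_val _ _ _ _ _ _ _ dP).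
have /andP[a0 a1] := a01 y yT'.
have dA := derivableP (da y yT').
have dS := is_derive1_comp (is_derive1_sqrt a0) dA.
have r0 : Num.sqrt (alpha y) != 0 by rewrite gt_eqF // sqrtr_gt0.
have dV := @is_deriveV _ (Num.sqrt \o alpha) _ _ _ r0 dS.
have dM := is_deriveM dE dV.
eapply is_derive_eq; [exact dM|].
rewrite /vpF mul_scalar_mx mxE (dlogE (da y yT') a0) -derive1E /=.
set r := Num.sqrt (alpha y).
have ar : alpha y = r ^+ 2 by rewrite sqr_sqrtr // ltW.
rewrite ar.
rewrite /GRing.scale /=.
field.
by rewrite r0.
Qed.

Lemma psiE {R : realType} {D : nat} {T : R} {alpha : R -> R}
  {Psi : R -> R -> 'M[R]_D} :
  (forall t, t \in `[0, T] -> 0 < alpha t < 1) ->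
  (forall t, t \in `[0, T] -> derivable alpha t 1) ->
  (forall s, s \in `[0, T] -> Psi s s = 1%:M) ->
  (forall s, s \in `[0, T] -> {within `[0, T], continuous (fun u => Psi u s)}) ->
  (forall s t, s \in `[0, T] -> t \in `]0, T[ ->
     is_derive t 1 (fun u => Psi u s) (vpF D alpha t *m Psi t s)) ->
  forall s u, s \in `[0, T] -> u \in `[0, T] ->
  Psi u s = (Num.sqrt (alpha u) / Num.sqrt (alpha s))%:M.
Proof.
move=> a01 da H1 Hc Hd s u sT uT.
apply/matrixP => i j.
set q := (fun v => Psi v s i j) * (fun v => (Num.sqrt (alpha v))^-1).
have qc : forall v w, v \in `[0,T] -> w \in `[0,T] -> v <= w -> q v = q w.
  move=> v w vT wT vw.
  have H := @MVT_segment R q (fun _ => 0) v w vw.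
  have Hd' : forall x, x \in `]v, w[ -> is_derive x 1 q 0.
    move=> y yvw; apply: (@q_der _ _ _ _ _ s i j y a01 da Hd sT).
    move: vT wT yvw; rewrite !in_itv /= => /andP[v0 _] /andP[_ wT] /andP[vy yw].
    apply/andP; split; [exact: le_lt_trans v0 vy | exact: lt_le_trans yw wT].
  have Hw : {within `[v, w], continuous q}.
    apply: (continuous_subspaceW _ (@q_within _ _ _ _ _ s i j a01 da (Hc s sT))).
    move=> z /=; move: vT wT; rewrite !in_itv /= => /andP[v0 _] /andP[_ wT] /andP[vz zw].
    apply/andP; split; [exact: le_trans v0 vz | exact: le_trans zw wT].
  have [c _ Hc'] := H Hd' Hw.
  by apply/esym/eqP; rewrite -subr_eq0 Hc' mul0r.
have qus : q u = q s.
  case: (leP u s) => h; first exact: qc.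
  by apply/esym/qc => //; apply: ltW.
have /andP[au _] := a01 u uT.
have /andP[as0 _] := a01 s sT.
have ru : Num.sqrt (alpha u) != 0 by rewrite gt_eqF // sqrtr_gt0.
have qE : forall v, q v = Psi v s i j * (Num.sqrt (alpha v))^-1 by [].
have -> : Psi u s i j = q u * Num.sqrt (alpha u) by rewrite qE divfK.
rewrite qus qE H1 // !mxE.
by case: eqP => _; rewrite ?mulr1n ?mulr0n ?mul0r // mul1r mulrC.
Qed.


Lemma der_le0 {R : realType} {T : R} {alpha : R -> R} {x : R} :
  0 < T -> (forall t, t \in `[0, T] -> derivable alpha t 1) ->
  {in `[0, T] &, forall x y, x < y -> alpha y < alpha x} ->
  x \in `[0, T] -> derive1 alpha x <= 0.
Proof.
move=> T0 da dec xT.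
have H : (fun h : R => h^-1 *: ((alpha \o shift x) (h *: 1) - alpha x)) @ 0^'
   --> 'D_1 alpha x := da x xT.
rewrite derive1E.
have [xlt|xeq] : x < T \/ x = T.
  by move: xT; rewrite in_itv /= => /andP[_]; rewrite le_eqVlt => /orP[/eqP->|->]; [right|left].
- have Hr : (fun h : R => h^-1 *: ((alpha \o shift x) (h *: 1) - alpha x)) @ 0^'+
     --> 'D_1 alpha x.
    move=> A /H /nbhs_ballP[e e0 He]; apply/nbhs_ballP; exists e => // u ue u0; apply: He => //; by rewrite gt_eqF.
  apply: (cvgr_to_le Hr).
  near=> h.
  have h0 : 0 < h by near: h; exact: nbhs_right_gt.
  have hT : h < T - x by near: h; apply: nbhs_right_lt; rewrite subr_gt0.
  rewrite /= scaler1 pmulr_rle0 ?invr_gt0// subr_le0 ltW//.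
  apply: dec => //; last by rewrite ltrDr.
  move: xT; rewrite !in_itv /= => /andP[x0 _]; apply/andP; split.
    by rewrite addr_ge0 // ltW.
  by rewrite -lerBrDr ltW.
- have Hr : (fun h : R => h^-1 *: ((alpha \o shift x) (h *: 1) - alpha x)) @ 0^'-
     --> 'D_1 alpha x.
    move=> A /H /nbhs_ballP[e e0 He]; apply/nbhs_ballP; exists e => // u ue u0; apply: He => //; by rewrite lt_eqF.
  apply: (cvgr_to_le Hr).
  near=> h.
  have h0 : h < 0 by near: h; exact: nbhs_left_lt.
  have hT : - T < h by near: h; apply: nbhs_left_gt; rewrite oppr_lt0.
  rewrite /= scaler1 nmulr_rle0 ?invr_lt0// subr_ge0 ltW//.
  apply: dec => //; last by rewrite gtrDr.
  rewrite xeq !in_itv /=; apply/andP; split.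
    lra.
  lra.
Unshelve. all: by end_near. Qed.

Lemma integrandE (R : realType) (D : nat) (T : R) (alpha : R -> R)
  (Psi : R -> R -> 'M[R]_D) (a tau : R) :
  0 < T ->
  (forall t, t \in `[0, T] -> 0 < alpha t < 1) ->
  (forall t, t \in `[0, T] -> derivable alpha t 1) ->
  {in `[0, T] &, forall x y, x < y -> alpha y < alpha x} ->
  (forall s, s \in `[0, T] -> Psi s s = 1%:M) ->
  (forall s, s \in `[0, T] -> {within `[0, T], continuous (fun u => Psi u s)}) ->
  (forall s t, s \in `[0, T] -> t \in `]0, T[ ->
     is_derive t 1 (fun u => Psi u s) (vpF D alpha t *m Psi t s)) ->
  a \in `[0, T] -> tau \in `[0, T] ->
  2^-1 *: (Psi a tau *m vpG D alpha tau *m (vpG D alpha tau)^T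
                              *m invmx ((vpL D alpha tau)^T))
  = (- (2^-1 * Num.sqrt (alpha a)) * derive1 alpha tau *
      (Num.sqrt (alpha tau) * alpha tau * Num.sqrt (1 - alpha tau))^-1)%:M.
Proof.
move=> T0 a01 da dec H1 Hc Hd aT tT.
rewrite (psiE a01 da H1 Hc Hd tau a tT aT) /vpG /vpL !tr_scalar_mx invmx_scalar.
rewrite -!scalar_mxM scale_scalar_mx; congr (_%:M).
have /andP[a0 a1] := a01 tau tT.
have /andP[aa0 _] := a01 a aT.
have dl := dlogE (da tau tT) a0.
have dle := der_le0 T0 da dec tT.
have ndl : 0 <= - dlog alpha tau.
  by rewrite dl oppr_ge0 mulr_le0_ge0 // invr_ge0 ltW.
rewrite -!mulrA (mulrA (Num.sqrt (- dlog alpha tau))) -expr2 sqr_sqrtr // dl.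
set r := Num.sqrt (alpha tau).
have ar : alpha tau = r ^+ 2 by rewrite sqr_sqrtr // ltW.
have r0 : r != 0 by rewrite gt_eqF // sqrtr_gt0.
have s0 : Num.sqrt (1 - alpha tau) != 0 by rewrite gt_eqF // sqrtr_gt0 subr_gt0.
rewrite ar.
field.
by rewrite -ar s0 r0.
Qed.

Lemma Fder {R : realType} {T : R} {alpha : R -> R} (c y : R) :
  (forall t, t \in `[0, T] -> 0 < alpha t < 1) ->
  (forall t, t \in `[0, T] -> derivable alpha t 1) ->
  y \in `[0, T] ->
  is_derive y 1 (fun tau => c * (Num.sqrt (1 - alpha tau) * (Num.sqrt (alpha tau))^-1))
    (- (2^-1 * c) * derive1 alpha y *
      (Num.sqrt (alpha y) * alpha y * Num.sqrt (1 - alpha y))^-1).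
Proof.
move=> a01 da yT.
have /andP[a0 a1] := a01 y yT.
have dA := derivableP (da y yT).
have d1 := is_deriveB (is_derive_cst (1 : R) y 1) dA.
have b0 : 0 < 1 - alpha y by rewrite subr_gt0.
have dS1 := @is_derive1_comp _ Num.sqrt (cst 1 - alpha) _ _ _ (is_derive1_sqrt b0) d1.
have dS := is_derive1_comp (is_derive1_sqrt a0) dA.
have r0 : Num.sqrt (alpha y) != 0 by rewrite gt_eqF // sqrtr_gt0.
have dV := @is_deriveV _ (Num.sqrt \o alpha) _ _ _ r0 dS.
have dM := is_deriveM dS1 dV.
have dZ := is_deriveZ c dM.
eapply is_derive_eq; [exact dZ|].
rewrite -derive1E /=.
set r := Num.sqrt (alpha y).
have ar : alpha y = r ^+ 2 by rewrite sqr_sqrtr // ltW.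
have s0 : Num.sqrt (1 - alpha y) != 0 by rewrite gt_eqF // sqrtr_gt0.
set s := Num.sqrt (1 - alpha y) in s0 *.
have s2 : s ^+ 2 = 1 - alpha y by rewrite /s sqr_sqrtr // ltW.
rewrite /GRing.scale /= ar.
apply/eqP; rewrite -subr_eq0; apply/eqP.
transitivity ((- c * derive1 alpha y / (2 * r ^+ 3 * s)) * (r ^+ 2 + s ^+ 2 - 1)).
  field.
  by rewrite s0 r0.
by rewrite s2 ar [X in _ * X](_ : _ = 0) ?mulr0 //; ring.
Qed.

Lemma integral_h {R : realType} {T : R} {alpha : R -> R} (c a b : R) :
  (forall t, t \in `[0, T] -> 0 < alpha t < 1) ->
  (forall t, t \in `[0, T] -> derivable alpha t 1) ->
  {within `[0, T], continuous (derive1 alpha)} ->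
  0 <= a -> a < b -> b <= T ->
  Rintegral lebesgue_measure `[a, b]
    (fun tau => - (2^-1 * c) * derive1 alpha tau *
      (Num.sqrt (alpha tau) * alpha tau * Num.sqrt (1 - alpha tau))^-1)
  = c * (Num.sqrt (1 - alpha b) * (Num.sqrt (alpha b))^-1)
    - c * (Num.sqrt (1 - alpha a) * (Num.sqrt (alpha a))^-1).
Proof.
move=> a01 da dc a0 ab bT.
have sub : forall z, z \in `[a, b] -> z \in `[0, T].
  move=> z; rewrite !in_itv /= => /andP[az zb]; apply/andP; split.
    exact: le_trans a0 az.
  exact: le_trans zb bT.
set F := fun tau => c * (Num.sqrt (1 - alpha tau) * (Num.sqrt (alpha tau))^-1).
set h := fun tau => - (2^-1 * c) * derive1 alpha tau *
      (Num.sqrt (alpha tau) * alpha tau * Num.sqrt (1 - alpha tau))^-1.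
have dF : forall y, y \in `[a, b] -> is_derive y 1 F (h y).
  move=> y /sub yT; exact: (Fder c y a01 da yT).
have cF : forall y, y \in `[a, b] -> {for y, continuous F}.
  move=> y /dF dy; apply: differentiable_continuous; apply/derivable1_diffP.
  exact: (@ex_derive _ _ _ _ _ _ _ dy).
have aab : a \in `[a, b] by rewrite in_itv /= lexx ltW.
have bab : b \in `[a, b] by rewrite in_itv /= lexx ltW.
have hc : {within `[a, b], continuous h}.
  have K : {within `[a, b], continuous (fun tau =>
      (Num.sqrt (alpha tau) * alpha tau * Num.sqrt (1 - alpha tau))^-1)}.
    apply: continuous_in_subspaceT => v; rewrite inE /= => /sub vT.
    have /andP[av0 av1] := a01 v vT.
    have ca := alpha_cont da v vT.
    have h1 : {for v, continuous (fun x => Num.sqrt (alpha x))}.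
      have := continuous_comp ca (@sqrt_continuous R (alpha v)). exact.
    have h2 : {for v, continuous (fun x => 1 - alpha x)}.
      apply: continuousB; [exact: cvg_cst | exact: ca].
    have h3 : {for v, continuous (fun x => Num.sqrt (1 - alpha x))}.
      have := continuous_comp h2 (@sqrt_continuous R (1 - alpha v)). exact.
    have h4 := continuousM (continuousM h1 ca) h3.
    have n0 : Num.sqrt (alpha v) * alpha v * Num.sqrt (1 - alpha v) != 0.
      by rewrite !mulf_neq0 // gt_eqF // ?sqrtr_gt0 // subr_gt0.
    exact: (cvgV n0 h4).
  have A' : {within `[a, b], continuous (derive1 alpha)}.
    apply: (continuous_subspaceW _ dc) => z /=; exact: sub.
  move=> x.
  have c0 : {for x, continuous (fun _ : subspace `[a, b] => - (2^-1 * c))}.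
    exact: cvg_cst.
  have := continuousM (continuousM c0 (A' x)) (K x). exact.
have oc : forall y, y \in `]a, b[ -> y \in `[a, b].
  by move=> y; rewrite !in_itv /= => /andP[ay yb]; rewrite !ltW.
have dFoo : derivable_oo_LRcontinuous F a b.
  split.
  - move=> y /oc yab; exact: (@ex_derive _ _ _ _ _ _ _ (dF y yab)).
  - apply: cvg_at_right_filter; exact: (cF a aab).
  - apply: cvg_at_left_filter; exact: (cF b bab).
have F'h : {in `]a, b[, derive1 F =1 h}.
  move=> y /oc yab; rewrite derive1E; exact: (@derive_val _ _ _ _ _ _ _ (dF y yab)).
have := continuous_FTC2 ab hc dFoo F'h.
by rewrite /Rintegral => ->; rewrite -EFinB.
Qed.

Theorem proposition2 (R : realType) (D : nat) (T : R) (alpha : R -> R)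
  (Psi : R -> R -> 'M[R]_D) (eps_theta : 'cV[R]_D -> R -> 'cV[R]_D) :
  0 < T ->
  (* alpha : [0,T] -> (0,1), continuously differentiable, decreasing *)
  (forall t, t \in `[0, T] -> 0 < alpha t < 1) ->
  (forall t, t \in `[0, T] -> derivable alpha t 1) ->
  {within `[0, T], continuous (derive1 alpha)} ->
  {in `[0, T] &, forall x y, x < y -> alpha y < alpha x} ->
  (* Psi is the transition matrix of F: d/dt Psi(t,s) = F_t Psi(t,s), Psi(s,s) = I *)
  (forall s, s \in `[0, T] -> Psi s s = 1%:M) ->
  (forall s, s \in `[0, T] -> {within `[0, T], continuous (fun u => Psi u s)}) ->
  (forall s t, s \in `[0, T] -> t \in `]0, T[ ->
     is_derive t 1 (fun u => Psi u s) (vpF D alpha t *m Psi t s)) ->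
  forall (t dt : R) (x : 'cV[R]_D), 0 <= t - dt -> t - dt < t -> t <= T ->
    Psi (t - dt) t *m x
    + mx_integral t (t - dt)
        (fun tau => 2^-1 *: (Psi (t - dt) tau *m vpG D alpha tau
                              *m (vpG D alpha tau)^T
                              *m invmx ((vpL D alpha tau)^T)))
      *m eps_theta x t
    = Num.sqrt (alpha (t - dt) / alpha t) *: x
      + (Num.sqrt (1 - alpha (t - dt))
         - Num.sqrt (alpha (t - dt) / alpha t) * Num.sqrt (1 - alpha t))
        *: eps_theta x t.
Proof.
move=> T0 a01 da dc dec H1 Hc Hd t dt x a0 ab bT.
set a := t - dt in a0 ab *.
have aT : a \in `[0, T] by rewrite in_itv /= a0 (le_trans (ltW ab) bT).
have bT' : t \in `[0, T] by rewrite in_itv /= bT (le_trans a0 (ltW ab)).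
have sub : forall z, z \in `[a, t] -> z \in `[0, T].
  move=> z; rewrite !in_itv /= => /andP[az zb]; apply/andP; split.
    exact: le_trans a0 az.
  exact: le_trans zb bT.
rewrite (psiE a01 da H1 Hc Hd t a bT' aT).
set c := Num.sqrt (alpha a).
have Ie : mx_integral t a
        (fun tau => 2^-1 *: (Psi a tau *m vpG D alpha tau
                              *m (vpG D alpha tau)^T
                              *m invmx ((vpL D alpha tau)^T)))
   = (- (c * (Num.sqrt (1 - alpha t) * (Num.sqrt (alpha t))^-1)
    - c * (Num.sqrt (1 - alpha a) * (Num.sqrt (alpha a))^-1)))%:M.
  apply/matrixP => i j; rewrite !mxE leNgt ab /=.
  case: (eqVneq i j) => [<-|nij].
    rewrite mulr1n -(integral_h c a t a01 da dc a0 ab bT); congr (- _).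
    apply: eq_Rintegral => z; rewrite inE /= => /sub zT.
    by rewrite (@integrandE _ _ _ _ _ a z T0 a01 da dec H1 Hc Hd aT zT) mxE eqxx mulr1n.
  rewrite mulr0n (@eq_Rintegral _ _ _ _ _ (fun _ => 0)).
    by rewrite Rintegral_cst ?mul0r ?oppr0.
  move=> z; rewrite inE /= => /sub zT.
  by rewrite (@integrandE _ _ _ _ _ a z T0 a01 da dec H1 Hc Hd aT zT) mxE (negbTE nij) mulr0n.
rewrite Ie !mul_scalar_mx.
have /andP[aa0 _] := a01 a aT.
have /andP[at0 at1] := a01 t bT'.
have c0 : c != 0 by rewrite gt_eqF // sqrtr_gt0.
have r0 : Num.sqrt (alpha t) != 0 by rewrite gt_eqF // sqrtr_gt0.
have sE : Num.sqrt (alpha a / alpha t) = c / Num.sqrt (alpha t).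
  by rewrite sqrtrM ?ltW // sqrtrV // ltW.
rewrite sE; congr (_ *: _ + _ *: _).
rewrite /c; field.
by rewrite r0 -/c c0.
Qed.
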